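(* Let $G=(V,E)$ be a graph with at least one edge, clique number $\omega$ and clique distance $\sigma$. Let $\mathcal{C}^*$ be a clique cover of $G$ minimizing $\|\mathcal{C}^*\|$ among all clique covers of $G$, and let $\mathcal{C}$ be any family produced by the $\sigma$-succinct construction on $G$. Then $$\|\mathcal{C}\|\le \min\{\omega-1,\ 2\sigma-1\}\cdot\|\mathcal{C}^*\|.$$
   Context: All graphs are finite, simple, undirected, with no isolated vertices; $n=|V|$, $m=|E|$; $N(v)$ open neighbourhood, $N[v]=N(v)\cup\{v\}$. A clique is a vertex set inducing a complete subgraph; $\omega$ is the maximum clique size. Clique distance $\sigma:=\binom{n}{2}-m+1$. $\|\mathcal{F}\|:=\sum_{F\in\mathcal{F}}|F|$. A clique cover of $G$ is an indexed family of cliques of $G$ such that every edge lies in at least one member. First-fit greedy coloring of the complement: fix an ordering $v_1,\dots,v_n$ of $V$; process the vertices in this order and give $v_i$ the smallest positive integer $k$ such that every previously processed vertex of colour $k$ is adjacent to $v_i$ in $G$. Let $F_1,\dots,F_p$ be the colour classes. For $v\in F_k$ let $T_v:=\{\ell<k: F_\ell\cap N(v)\neq\emptyset\}$. The $\sigma$-succinct construction maintains a family $\mathcal{C}$; an edge is uncovered if it is not contained in any current member of $\mathcal{C}$. To extend a member $C$ means: while there is an uncovered edge $\{x,y\}$ with $C\subseteq N[x]\cap N[y]$, replace $C$ (inside $\mathcal{C}$) by $C\cup\{x,y\}$. Step 1: $\mathcal{C}:=\{F_\ell:|F_\ell|\ge2\}$; in an arbitrary fixed order extend each member. Step 2: in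 an arbitrary fixed order of the pairs $(v,\ell)$ with $\ell\in T_v$, let $U:=\{u\in F_\ell\cap N(v):\{u,v\}\text{ uncovered}\}$; if $U\ne\emptyset$, add $C_{v,\ell}:=U\cup\{v\}$ to $\mathcal{C}$ and extend it. The output is the final $\mathcal{C}$ (any choices allowed). *)

(* Defs.v *)
From mathcomp Require Import all_boot.
Set Implicit Arguments. Unset Strict Implicit. Unset Printing Implicit Defensive.

Section Graph.
Variables (T : finType) (e : rel T).

Definition simple_graph := symmetric e /\ irreflexive e.
Definition no_isolated := forall x : T, exists y, e x y.

Definition nbh (x : T) : {set T} := [set y | e x y].
Definition cnbh (x : T) : {set T} := x |: nbh x.

Definition is_clique (A : {set T}) : Prop :=
  forall x y, x \in A -> y \in A -> x != y -> e x y.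

Definition n_edges : nat := #|[set A : {set T} | (#|A| == 2) && [forall x in A, forall y in A, (x != y) ==> e x y]]|.
Definition clique_number : nat :=
  \max_(A : {set T} | [forall x in A, forall y in A, (x != y) ==> e x y]) #|A|.
Definition clique_distance : nat := 'C(#|T|, 2) - n_edges + 1.

Definition fam_size (F : seq {set T}) : nat := \sum_(C <- F) #|C|.

Definition is_clique_cover (F : seq {set T}) : Prop :=
  (forall C, C \in F -> is_clique C) /\
  (forall x y, e x y -> exists2 C, C \in F & (x \in C) && (y \in C)).

(* First-fit greedy colouring of the complement w.r.t. the ordering s *)
Definition first_fit (s : seq T) (col : T -> nat) : Prop :=
  uniq s /\ (forall x, x \in s) /\
  forall v, [/\ 1 <= col v,
    (forall w, index w s < index v s -> col w = col v -> e v w) &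
    (forall k, 1 <= k < col v ->
       exists w, [/\ index w s < index v s, col w = k & ~~ e v w])].

Definition colour_class (col : T -> nat) (k : nat) : {set T} := [set x | col x == k].

Definition Tset (col : T -> nat) (v : T) (l : nat) : Prop :=
  l < col v /\ exists u, (u \in colour_class col l) && e v u.

Definition uncovered (F : seq {set T}) (x y : T) : Prop :=
  forall C, C \in F -> ~~ ((x \in C) && (y \in C)).

Definition U_set (col : T -> nat) (l : nat) (v : T) (F : seq {set T}) : {set T} :=
  [set u in colour_class col l | e u v & all (fun C : {set T} => ~~ ((u \in C) && (v \in C))) F].

Inductive extends (i : nat) : seq {set T} -> seq {set T} -> Prop :=
| ext_stop F :
    (forall x y, e x y -> uncovered F x y ->
       ~ (nth set0 F i \subset cnbh x :&: cnbh y)) ->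
    extends i F F
| ext_step F x y F' :
    e x y -> uncovered F x y ->
    nth set0 F i \subset cnbh x :&: cnbh y ->
    extends i (set_nth set0 F i (nth set0 F i :|: [set x; y])) F' ->
    extends i F F'.

Inductive extend_seq : seq nat -> seq {set T} -> seq {set T} -> Prop :=
| exs_nil F : extend_seq [::] F F
| exs_cons i js F F1 F' :
    extends i F F1 -> extend_seq js F1 F' -> extend_seq (i :: js) F F'.

Inductive step2 (col : T -> nat) : seq (T * nat) -> seq {set T} -> seq {set T} -> Prop :=
| st2_nil F : step2 col [::] F F
| st2_skip v l ps F F' :
    U_set col l v F = set0 ->
    step2 col ps F F' -> step2 col ((v, l) :: ps) F F'
| st2_add v l ps F F1 F' :
    U_set col l v F != set0 ->
    extends (size F) (rcons F (v |: U_set col l v F)) F1 ->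
    step2 col ps F1 F' -> step2 col ((v, l) :: ps) F F'.

Definition sigma_succinct (F : seq {set T}) : Prop :=
  exists (s : seq T) (col : T -> nat), first_fit s col /\
  let p := \max_(x : T) col x in
  let F0 := [seq colour_class col l | l <- iota 1 p & 2 <= #|colour_class col l|] in
  exists (ord : seq nat) (F1 : seq {set T}) (ps : seq (T * nat)),
    [/\ perm_eq ord (iota 0 (size F0)),
        extend_seq ord F0 F1,
        uniq ps,
        (forall v l, (v, l) \in ps <-> Tset col v l) &
        step2 col ps F1 F].

End Graph.

(* Main.v *)
Require Import Defs.
From mathcomp Require Import all_boot.
From mathcomp Require Import zify.
Set Implicit Arguments. Unset Strict Implicit. Unset Printing Implicit Defensive.


Definition dcnt {T : finType} (F : seq {set T}) (v : T) : nat :=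
  count (fun C : {set T} => v \in C) F.
Definition covd {T : finType} (e : rel T) (F : seq {set T}) (v : T) : nat :=
  #|[set u | e v u & has (fun C : {set T} => (u \in C) && (v \in C)) F]|.
Definition Inv {T : finType} (e : rel T) (F : seq {set T}) := forall v, dcnt F v <= covd e F v.

Lemma fam_size_dcnt (T : finType) (F : seq {set T}) : fam_size F = \sum_x dcnt F x.
Proof.
elim: F => [|C F IH]; first by rewrite /fam_size big_nil big1.
rewrite /fam_size big_cons -/(fam_size F) IH /dcnt /=.
rewrite big_split /=; congr (_ + _).
rewrite -sum1_card big_mkcond /=; apply: eq_bigr => x _; by case: (x \in C).
Qed.

Lemma has_mono (T : finType) (F F' : seq {set T}) (a b : T) :
  size F <= size F' -> (forall i, nth set0 F i \subset nth set0 F' i) ->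
  has (fun C : {set T} => (a \in C) && (b \in C)) F ->
  has (fun C : {set T} => (a \in C) && (b \in C)) F'.
Proof.
move=> hs hsub /(has_nthP set0) [i hi /andP [ha hb]].
apply/(has_nthP set0); exists i; first exact: leq_trans hi hs.
by rewrite !(subsetP (hsub i)).
Qed.

Lemma covd_mono (T : finType) (e : rel T) (F F' : seq {set T}) v :
  size F <= size F' -> (forall i, nth set0 F i \subset nth set0 F' i) ->
  covd e F v <= covd e F' v.
Proof.
move=> hs hsub; apply: subset_leq_card; apply/subsetP => u; rewrite !inE.
by case/andP => -> /=; apply: has_mono.
Qed.

Lemma covd_lt (T : finType) (e : rel T) (F F' : seq {set T}) v u :
  size F <= size F' -> (forall i, nth set0 F i \subset nth set0 F' i) ->
  e v u -> ~~ has (fun C : {set T} => (u \in C) && (v \in C)) F ->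
  has (fun C : {set T} => (u \in C) && (v \in C)) F' ->
  covd e F v < covd e F' v.
Proof.
move=> hs hsub hvu hn hh; apply: proper_card; apply/properP; split.
  apply/subsetP => w; rewrite !inE; by case/andP => -> /=; apply: has_mono.
by exists u; rewrite !inE hvu //= (negbTE hn).
Qed.

Lemma count_set_nth (X : Type) (a : pred X) x0 (s : seq X) i y : i < size s ->
  count a (set_nth x0 s i y) + a (nth x0 s i) = count a s + a y.
Proof.
elim: s i => [|z s IH] [|i] //= hi.
  lia.
rewrite -addnA IH //; lia.
Qed.

Lemma Inv_ext (T : finType) (e : rel T) F i x y :
  symmetric e -> irreflexive e ->
  Inv e F -> i < size F -> e x y -> uncovered F x y ->
  Inv e (set_nth set0 F i (nth set0 F i :|: [set x; y])).
Proof.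
move=> hsym hirr hinv hi hxy hunc z.
set F' := set_nth _ _ _ _.
have hsz : size F' = size F by rewrite size_set_nth; apply/maxn_idPr.
have hsub : forall j, nth set0 F j \subset nth set0 F' j.
  move=> j; rewrite nth_set_nth /=; case: eqP => [->|_]; [exact: subsetUl | exact: subxx].
have hd := count_set_nth (fun C : {set T} => z \in C) set0 (nth set0 F i :|: [set x; y]) hi.
rewrite -/F' /= in hd.
have hxyneq : x != y by apply/eqP => exy; move: hxy; rewrite exy hirr.
have hhas : forall a b, a \in [set x; y] -> b \in [set x; y] ->
    has (fun C : {set T} => (a \in C) && (b \in C)) F'.
  move=> a b ha hb; apply/(has_nthP set0); exists i; first by rewrite hsz.
  by rewrite nth_set_nth /= eqxx !inE; rewrite !inE in ha hb; rewrite ha hb !orbT.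
have hmono := covd_mono e z (eq_leq (esym hsz)) hsub.
case hz: (z \in [set x; y]).
- have hlt : covd e F z < covd e F' z.
    move: hz; rewrite !inE => /orP [] /eqP ->.
    + apply: (@covd_lt _ _ _ _ _ y); rewrite ?hsz //.
        apply/hasP => -[C hC /andP [h1 h2]]; move: (hunc C hC); by rewrite h1 h2.
      by apply: hhas; rewrite !inE eqxx ?orbT.
    + apply: (@covd_lt _ _ _ _ _ x); rewrite ?hsz //; first by rewrite hsym.
        apply/hasP => -[C hC /andP [h1 h2]]; move: (hunc C hC); by rewrite h1 h2.
      by apply: hhas; rewrite !inE eqxx ?orbT.
  have := hinv z; rewrite /dcnt in hd *; rewrite inE hz orbT in hd.
  move: hd; case: (z \in nth set0 F i) => /=; lia.
- have := hinv z; rewrite /dcnt in hd *; rewrite inE hz orbF in hd.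
  move: hd; case: (z \in nth set0 F i) => /=; lia.
Qed.

Lemma Inv_add (T : finType) (e : rel T) F v (U : {set T}) :
  symmetric e -> U != set0 ->
  (forall u, u \in U -> e u v && ~~ has (fun C : {set T} => (u \in C) && (v \in C)) F) ->
  Inv e F -> Inv e (rcons F (v |: U)).
Proof.
move=> hsym hU hUP hinv z.
set F' := rcons F _.
have hsz : size F <= size F' by rewrite size_rcons.
have hsub : forall j, nth set0 F j \subset nth set0 F' j.
  move=> j; rewrite nth_rcons; case: ifP => // hj.
  by rewrite nth_default ?sub0set // leqNgt hj.
have hd : dcnt F' z = dcnt F z + (z \in v |: U).
  by rewrite /dcnt /F' -cats1 count_cat /= addn0.
have hhas : forall a b, a \in v |: U -> b \in v |: U ->
    has (fun C : {set T} => (a \in C) && (b \in C)) F'.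
  move=> a b ha hb; apply/hasP; exists (v |: U); last by rewrite ha hb.
  by rewrite mem_rcons mem_head.
have hmono := covd_mono e z hsz hsub.
rewrite hd; case hz: (z \in v |: U); last by rewrite addn0; exact: leq_trans (hinv z) hmono.
have hlt : covd e F z < covd e F' z.
  case: (eqVneq z v) => [->|hzv].
    case/set0Pn: hU => u hu; have /andP [h1 h2] := hUP u hu.
    apply: (@covd_lt _ _ _ _ _ u) => //; first by rewrite hsym.
    by apply: hhas; rewrite !inE ?eqxx ?hu ?orbT.
  have hzU : z \in U by move: hz; rewrite !inE (negbTE hzv).
  have /andP [h1 h2] := hUP z hzU.
  apply: (@covd_lt _ _ _ _ _ v) => //.
    apply/hasP => -[C hC /andP [c1 c2]]; move/hasP: h2; apply; exists C => //; by rewrite c1 c2.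
  by apply: hhas; rewrite !inE ?eqxx ?hzU ?orbT.
have := hinv z; lia.
Qed.

Lemma extends_Inv (T : finType) (e : rel T) i F F' :
  symmetric e -> irreflexive e -> extends e i F F' -> i < size F -> Inv e F ->
  Inv e F' /\ size F' = size F.
Proof.
move=> hs hirr; elim => [F0 _ | F0 x y F1 hxy hunc _ _ IH] hsz hinv; first by split.
have hsz1 : size (set_nth set0 F0 i (nth set0 F0 i :|: [set x; y])) = size F0.
  by rewrite size_set_nth; apply/maxn_idPr.
case: IH; first by rewrite hsz1.
  exact: Inv_ext.
by move=> h1 h2; split => //; rewrite h2 hsz1.
Qed.

Lemma extend_seq_Inv (T : finType) (e : rel T) ord F F' :
  symmetric e -> irreflexive e -> extend_seq e ord F F' ->
  (forall i, i \in ord -> i < size F) -> Inv e F ->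
  Inv e F' /\ size F' = size F.
Proof.
move=> hs hirr; elim => [F0 | i js F0 F1 F2 hext _ IH] hord hinv; first by split.
have [h1 h2] := extends_Inv hs hirr hext (hord i (mem_head _ _)) hinv.
case: IH => //.
  by move=> j hj; rewrite h2; apply: hord; rewrite inE hj orbT.
by move=> h3 h4; split => //; rewrite h4 h2.
Qed.

Lemma step2_Inv (T : finType) (e : rel T) col ps F F' :
  symmetric e -> irreflexive e -> step2 e col ps F F' -> Inv e F ->
  Inv e F' /\ size F' <= size F + size ps.
Proof.
move=> hs hirr; elim => [F0 | v l ps0 F0 F1 _ _ IH | v l ps0 F0 F1 F2 hU hext _ IH] hinv.
- by split => //; rewrite addn0.
- by case: (IH hinv) => h1 h2; split => //=; rewrite addnS ltnW // ltnS.
- have hinv1 : Inv e (rcons F0 (v |: U_set e col l v F0)).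
    apply: Inv_add => // u; rewrite inE => /andP [_ /andP [h1 h2]].
    rewrite h1 /=; apply/hasP => -[C hC hCuv].
    by move/allP: h2 => /(_ C hC); rewrite hCuv.
  have hlt : size F0 < size (rcons F0 (v |: U_set e col l v F0)) by rewrite size_rcons.
  have [h1 h2] := extends_Inv hs hirr hext hlt hinv1.
  case: (IH h1) => h3 h4; split => //.
  move: h4; rewrite h2 size_rcons /=; lia.
Qed.

Lemma ff_adj (T : finType) (e : rel T) s col z w :
  symmetric e -> first_fit e s col -> z != w -> col w = col z -> e z w.
Proof.
move=> hsym [hu [hall hff]] hzw hc.
have hne : index w s != index z s.
  apply/eqP => hi; move/eqP: hzw; apply.
  by rewrite -(nth_index z (hall z)) -hi nth_index.
case: (ltngtP (index w s) (index z s)) => hlt.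
- by have [_ h _] := hff z; apply: h.
- by have [_ h _] := hff w; rewrite hsym; apply: h.
- by rewrite hlt eqxx in hne.
Qed.

Lemma Inv_init (T : finType) (e : rel T) s col :
  symmetric e -> first_fit e s col ->
  Inv e [seq colour_class col l | l <- iota 1 (\max_(x : T) col x) & 2 <= #|colour_class col l|].
Proof.
move=> hsym hff z.
set F0 := [seq _ | l <- _ & _].
have hd1 : dcnt F0 z <= 1.
  rewrite /dcnt /F0 count_map.
  rewrite (eq_count (a2 := pred1 (col z))); last first.
    by move=> l /=; rewrite /colour_class inE eq_sym.
  by rewrite count_uniq_mem ?leq_b1 // filter_uniq // iota_uniq.
case: (posnP (dcnt F0 z)) => [->//|hpos]; apply: leq_trans hd1 _.
rewrite /dcnt -has_count in hpos.
case/hasP: hpos => C hC hzC; have hC' := hC.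
case/mapP: hC => l; rewrite mem_filter => /andP [h2 _] hCl.
have : 0 < #|colour_class col l :\ z|.
  move: h2; rewrite (cardsD1 z) -hCl hzC; lia.
rewrite card_gt0 => /set0Pn [w]; rewrite !inE => /andP [hwz hwl].
move: hzC; rewrite hCl inE => hzl.
have hzw : e z w by apply: (ff_adj hsym hff); rewrite ?(eqP hwl) ?(eqP hzl) // eq_sym.
rewrite card_gt0; apply/set0Pn; exists w; rewrite inE hzw /=.
apply/hasP; exists C => //.
by rewrite hCl !inE hwl hzl.
Qed.

Definition NE {T : finType} (e : rel T) : {set {set T}} :=
  [set A : {set T} | (#|A| == 2) && ~~ [forall x in A, forall y in A, (x != y) ==> e x y]].

Lemma cd_NE (T : finType) (e : rel T) : clique_distance e = #|NE e| + 1.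
Proof.
rewrite /clique_distance -card_draws /n_edges /NE.
rewrite -(cardsID [set A : {set T} | [forall x in A, forall y in A, (x != y) ==> e x y]]
                  [set A : {set T} | #|A| == 2]).
set a := #|_ :&: _|; set b := #|_ :\: _|.
set a' := #|_|; set b' := #|_|.
have -> : a = a'.
  rewrite /a /a'; apply: eq_card => A; by rewrite !inE.
have -> : b = b'.
  rewrite /b /b'; apply: eq_card => A; by rewrite !inE andbC.
lia.
Qed.

Lemma NE_mem (T : finType) (e : rel T) v w : v != w -> ~~ e v w -> [set v; w] \in NE e.
Proof.
move=> hvw hn; rewrite inE cards2 hvw /=; apply/negP => /forallP /(_ v) /implyP.
move=> /(_ (set21 _ _)) /forallP /(_ w) /implyP /(_ (set22 _ _)) /implyP /(_ hvw).
by rewrite (negbTE hn).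
Qed.

Definition wit {T : finType} (e : rel T) (s : seq T) (col : T -> nat) (v : T) (l : nat) : T :=
  odflt v [pick w | (index w s < index v s) && (col w == l) && ~~ e v w].

Lemma witP (T : finType) (e : rel T) s col v l :
  first_fit e s col -> 1 <= l < col v ->
  [/\ index (wit e s col v l) s < index v s, col (wit e s col v l) = l & ~~ e v (wit e s col v l)].
Proof.
move=> [_ [_ hff]] hl; rewrite /wit; case: pickP => [w /andP [/andP [h1 /eqP h2] h3]|hn] //=.
have [_ _ h] := hff v; have [w [h1 h2 h3]] := h l hl.
by move: (hn w); rewrite h1 h2 eqxx h3.
Qed.

Lemma pairs_le (T : finType) (e : rel T) s col (qs : seq (T * nat)) :
  first_fit e s col -> uniq qs ->
  (forall q, q \in qs -> 1 <= q.2 < col q.1) -> size qs <= #|NE e|.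
Proof.
move=> hff huq hq.
pose f (q : T * nat) := [set q.1; wit e s col q.1 q.2].
have hneq : forall v w, index w s < index v s -> v != w.
  by move=> v w h; apply/eqP => hvw; rewrite hvw ltnn in h.
have hinj : {in qs &, injective f}.
  move=> [v l] [v' l'] /hq /= hl /hq /= hl'; rewrite /f /=.
  have [a1 a2 a3] := witP hff hl; have [b1 b2 b3] := witP hff hl'.
  set w := wit _ _ _ v l in a1 a2 a3 *; set w' := wit _ _ _ v' l' in b1 b2 b3 *.
  move=> heq.
  have hv : v \in [set v'; w'] by rewrite -heq set21.
  have hw : w \in [set v'; w'] by rewrite -heq set22.
  have hv' : v' \in [set v; w] by rewrite heq set21.
  rewrite !inE in hv hw hv'.
  case/orP: hv => /eqP hv.
  - case/orP: hw => /eqP hw.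
      by rewrite hw -hv ltnn in a1.
    by rewrite -a2 -b2 hw hv.
  - case/orP: hv' => /eqP hv'.
      by rewrite -hv hv' ltnn in b1.
    by rewrite -hv hv' in b1; move: (ltn_trans a1 b1); rewrite ltnn.
rewrite cardE -(size_map f); apply: uniq_leq_size; first by rewrite map_inj_in_uniq.
move=> A /mapP [[v l] hvl ->]; rewrite mem_enum /f /=.
have [a1 a2 a3] := witP hff (hq _ hvl).
exact: NE_mem (hneq _ _ a1) a3.
Qed.

Lemma deg_le (T : finType) (v : T) (F : seq {set T}) (S : {set T}) :
  (forall u, u \in S -> exists2 K, K \in F & [&& v \in K, u \in K & u != v]) ->
  #|S| <= \sum_(K <- F) (v \in K) * (#|K| - 1).
Proof.
elim: F S => [|K F IH] S hS.
  rewrite big_nil leqn0 cards_eq0; apply/eqP/setP => u; rewrite inE; apply/negP => /hS [K].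
  by rewrite in_nil.
rewrite big_cons.
case hvK: (v \in K).
- rewrite mul1n -(cardsID (K :\ v) S).
  apply: leq_add.
    have := subset_leq_card (subsetIr S (K :\ v)).
    by rewrite (cardsD1 v K) hvK; lia.
  apply: IH => u; rewrite inE => /andP [hu hS']. have [K' hK' hh] := hS u hS'.
  move: hK'; rewrite inE => /orP [/eqP hKK|hK']; last by exists K'.
  subst K'; case/and3P: hh => _ h1 h2; by rewrite !inE h1 h2 in hu.
- rewrite mul0n add0n; apply: IH => u /hS [K' hK' hh].
  move: hK'; rewrite inE => /orP [/eqP hKK|hK']; last by exists K'.
  by subst; rewrite hvK in hh.
Qed.

Lemma wsum_le (T : finType) v (F : seq {set T}) w :
  (forall K, K \in F -> #|K| <= w) ->
  \sum_(K <- F) (v \in K) * (#|K| - 1) <= (w - 1) * dcnt F v.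
Proof.
elim: F => [|K F IH] hK; first by rewrite big_nil.
rewrite big_cons /dcnt /= -/(dcnt F v).
have h1 := hK K (mem_head _ _).
have h2 : \sum_(K <- F) (v \in K) * (#|K| - 1) <= (w - 1) * dcnt F v.
  by apply: IH => K' hK'; apply: hK; rewrite inE hK' orbT.
case: (v \in K) => /=; rewrite mulnDr; nia.
Qed.

Lemma fam_le (T : finType) (F : seq {set T}) : fam_size F <= size F * #|T|.
Proof.
elim: F => [|C F IH]; first by rewrite /fam_size big_nil.
rewrite /fam_size big_cons -/(fam_size F) /= mulSn; apply: leq_add => //; exact: max_card.
Qed.

Theorem mainTheorem6 (T : finType) (e : rel T) :
  simple_graph e -> no_isolated e -> (exists x y, e x y) ->
  forall Cstar : seq {set T},
    is_clique_cover e Cstar ->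
    (forall C' : seq {set T}, is_clique_cover e C' -> fam_size Cstar <= fam_size C') ->
  forall F : seq {set T}, sigma_succinct e F ->
    fam_size F <= minn (clique_number e - 1) (2 * clique_distance e - 1) * fam_size Cstar.
Proof.
move=> [hsym hirr] hiso [x0 [y0 hxy0]] Cstar [hCcl hCcov] _ F [s [col [hff H]]].
move: H => /= [ord [F1 [ps [hperm hext huq hps hst]]]].
have hinv0 := Inv_init hsym hff.
set F0 := [seq _ | l <- _ & _] in hinv0 hperm hext.
have [hinv1 hsz1] : Inv e F1 /\ size F1 = size F0.
  apply: (extend_seq_Inv hsym hirr hext) => // i hi.
  by rewrite (perm_mem hperm) mem_iota in hi.
have [hinv hsz] := step2_Inv hsym hirr hst hinv1.
rewrite minnMl leq_min; apply/andP; split.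
- rewrite !fam_size_dcnt big_distrr /=; apply: leq_sum => v _.
  apply: leq_trans (hinv v) _.
  apply: (@leq_trans #|nbh e v|).
    by apply: subset_leq_card; apply/subsetP => u; rewrite !inE => /andP [].
  apply: leq_trans (deg_le (F:=Cstar) (v:=v) (S:=nbh e v) _) _.
    move=> u; rewrite inE => hvu; have [K hK /andP [h1 h2]] := hCcov v u hvu.
    exists K => //; rewrite h1 h2 /=; apply/eqP => huv; by rewrite huv hirr in hvu.
  apply: wsum_le => K hK; rewrite /clique_number.
  apply: (leq_bigmax_cond (F:=fun A : {set T} => #|A|)).
  apply/forallP => a; apply/implyP => ha; apply/forallP => b; apply/implyP => hb.
  by apply/implyP => hab; exact: hCcl K hK a b ha hb hab.
- have hT : #|T| <= fam_size Cstar.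
    rewrite fam_size_dcnt -sum1_card; apply: leq_sum => x _.
    have [y hy] := hiso x; have [K hK /andP [h1 _]] := hCcov x y hy.
    by rewrite /dcnt -has_count; apply/hasP; exists K.
  apply: leq_trans (fam_le F) _; apply: leq_mul => //.
  have hF0 : size F0 <= \max_(x : T) col x.
    by rewrite /F0 size_map size_filter (leq_trans (count_size _ _)) // size_iota.
  have hps' : size ps <= #|NE e|.
    apply: (pairs_le hff huq) => -[v l] /hps [hl [u /andP [hu _]]] /=.
    rewrite hl andbT; move: hu; rewrite inE => /eqP <-.
    by case: hff => _ [_ h]; case: (h u).
  have hTpos : 0 < #|T| by apply/card_gt0P; exists x0.
  have [v0 hv0] := eq_bigmax col hTpos.
  rewrite hv0 in hF0.
  have hp : col v0 - 1 <= #|NE e|.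
    have := @pairs_le _ e s col [seq (v0, l) | l <- iota 1 (col v0 - 1)] hff.
    rewrite size_map size_iota; apply.
      by rewrite map_inj_uniq ?iota_uniq // => a b [].
    move=> q /mapP [l]; rewrite mem_iota => hl -> /=.
    move: hl; lia.
  rewrite cd_NE; move: hsz; rewrite hsz1; lia.
Qed.
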